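(* Let $C$ be a kernel configuration and let $R_C$ be the set of (equivalence classes of) endomorphisms obtained from the generators $$\{\rho[\theta]:\rho\in K[X]\}\cup\{\pi_{\mathrm{Im}(F^C)}:F\subseteq K[X]_{\mathrm{irr}}^{0<C<\infty}\text{ finite}\}\cup\{\eta[\theta]^{-1}:\eta\text{ monic},\ \mathrm{Fac}(\eta)\subseteq K[X]_{\mathrm{irr}}^{C<\infty}\}$$ by finitely many applications of pointwise addition $+$ and composition $\circ$. Then $(R_C,0,\mathrm{Id},+,\circ)$ is a commutative ring with unit, and its characteristic equals $\mathrm{Char}(K)$.
   Context: $K$ is a field, $K[X]_{\mathrm{irr}}$ the set of monic irreducible polynomials; $\mathrm{Fac}(\eta)$ is the set of monic irreducible factors of $\eta$. For $\rho=\sum_i(\rho)_iX^i$, $\rho[\theta]=\sum_i(\rho)_i\theta^i$; $\mathrm{Ker}(\rho),\mathrm{Im}(\rho)$ its kernel and image. A kernel configuration is $C=(c,d)$ with $c:K[X]_{\mathrm{irr}}\to\mathbb N\cup\{\infty\}$, $d\in\mathbb N_{>0}\cup\{\infty\}$, $d=\infty$ or $d=\sum_f\deg(f)c(f)$; $C(f)=c(f)$. $C$ algebraic if $d<\infty$ ($\mathrm{MiPo}(C)=\prod_ff^{C(f)}$), transcendental otherwise. $\theta$ is a $C$-endomorphism if $\mathrm{MiPo}(C)[\theta]=0$ (algebraic), resp. $\mathrm{Ker}(f^{C(f)})=\mathrm{Ker}(f^{C(f)+1})$ whenever $C(f)<\infty$ (transcendental); $C$-image-complete if $\mathrm{Im}(f^{C(f)})=\mathrm{Im}(f^{C(f)+1})$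 whenever $C(f)<\infty$. $K[X]_{\mathrm{irr}}^{0<C<\infty}=\{f:0<C(f)<\infty\}$, $K[X]_{\mathrm{irr}}^{C<\infty}=\{f:C(f)<\infty\}$, $F^C=\prod_{f\in F}f^{C(f)}$. Let $\mathcal T_C$ be the theory of $K$-vector spaces $\mathbb V$ with a $C$-endomorphism $\theta$ that is $C$-image-complete. In each model, for finite $F\subseteq K[X]_{\mathrm{irr}}^{0<C<\infty}$ one has $\mathbb V=\mathrm{Im}(F^C)\oplus\mathrm{Ker}(F^C)$; $\pi_{\mathrm{Im}(F^C)}$ is the projection onto the first summand along the second, and for monic $\eta$ with $\mathrm{Fac}(\eta)\subseteq K[X]_{\mathrm{irr}}^{C<\infty}$, $\eta[\theta]^{-1}(x)$ is the unique $u\in\mathrm{Im}(\mathrm{Fac}(\eta)^C)$ with $\eta[\theta](u)=\pi_{\mathrm{Im}(\mathrm{Fac}(\eta)^C)}(x)$. These are uniformly definable endomorphisms; elements of $R_C$ are regarded as definable functions modulo $\mathcal T_C$, i.e. two of them are equal iff they agree in every model of $\mathcal T_C$. *)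

(* Defs.v *)
From HB Require Import structures.
From mathcomp Require Import all_boot all_order all_algebra.
From Stdlib Require Import ClassicalEpsilon.
Set Implicit Arguments. Unset Strict Implicit. Unset Printing Implicit Defensive.
Import GRing.Theory.
Local Open Scope ring_scope.

Section KernelConfigurations.
Variable K : fieldType.

(* N u {oo} is encoded as option nat, with None = oo. *)

Definition mirr (f : {poly K}) : Prop := (f \is monic) /\ irreducible_poly f.

(* A kernel configuration C = (c, d); c is given on all polynomials,
   only its values on K[X]_irr are relevant. *)
Record kconf := KConf { kc_c : {poly K} -> option nat ; kc_d : option nat }.

Definition cnat (c : {poly K} -> option nat) (f : {poly K}) : nat := odflt 0%N (c f).

Definition support_seq (c : {poly K} -> option nat) (s : seq {poly K}) : Prop :=
  uniq s /\ (forall f, f \in s -> mirr f /\ exists k, c f = Some k) /\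
  (forall f, mirr f -> f \notin s -> c f = Some 0%N).

Definition kconf_ok (C : kconf) : Prop :=
  kc_d C <> Some 0%N /\
  forall n, kc_d C = Some n ->
    exists s, support_seq (kc_c C) s /\
      n = (\sum_(f <- s) (size f).-1 * cnat (kc_c C) f)%N.

Definition FC (C : kconf) (F : seq {poly K}) : {poly K} :=
  \prod_(f <- F) f ^+ cnat (kc_c C) f.

Section Model.
Variable V : lmodType K.
Variable theta : V -> V.

Definition peval (rho : {poly K}) (x : V) : V :=
  \sum_(i < size rho) rho`_i *: iter i theta x.

Definition Ker (g : V -> V) (x : V) : Prop := g x = 0.
Definition Im (g : V -> V) (y : V) : Prop := exists x, g x = y.

(* theta is a K-linear endomorphism of V which is a C-endomorphism and
   C-image-complete: (V, theta) is a model of T_C *)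
Definition is_model (C : kconf) : Prop :=
  (forall (a : K) (x y : V), theta (a *: x + y) = a *: theta x + theta y) /\
  (match kc_d C with
   | Some _ => exists s, support_seq (kc_c C) s /\
                 forall x, peval (FC C s) x = 0
   | None => forall f k, mirr f -> kc_c C f = Some k ->
                 forall x, Ker (peval (f ^+ k)) x <-> Ker (peval (f ^+ k.+1)) x
   end) /\
  (forall f k, mirr f -> kc_c C f = Some k ->
     forall y, Im (peval (f ^+ k)) y <-> Im (peval (f ^+ k.+1)) y).

Definition isFac (eta : {poly K}) (s : seq {poly K}) : Prop :=
  uniq s /\ forall f, f \in s <-> (mirr f /\ f %| eta).

Definition facs (eta : {poly K}) : seq {poly K} :=
  epsilon (inhabits [::]) (isFac eta).

Definition proj (C : kconf) (F : seq {poly K}) (x : V) : V :=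
  epsilon (inhabits (0 : V))
    (fun u => Im (peval (FC C F)) u /\ Ker (peval (FC C F)) (x - u)).

Definition pinv (C : kconf) (eta : {poly K}) (x : V) : V :=
  epsilon (inhabits (0 : V))
    (fun u => Im (peval (FC C (facs eta))) u /\
              peval eta u = proj C (facs eta) x).
End Model.

Inductive term :=
| TPoly of {poly K}
| TProj of seq {poly K}
| TInv of {poly K}
| TAdd of term & term
| TComp of term & term.

Fixpoint wf (C : kconf) (t : term) : Prop :=
  match t with
  | TPoly _ => True
  | TProj F => uniq F /\
      forall f, f \in F -> mirr f /\ exists k, kc_c C f = Some k.+1
  | TInv eta => eta \is monic /\
      forall f, mirr f -> f %| eta -> kc_c C f <> None
  | TAdd a b => wf C a /\ wf C b
  | TComp a b => wf C a /\ wf C b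
  end.

Fixpoint interp (C : kconf) (V : lmodType K) (theta : V -> V) (t : term)
    (x : V) : V :=
  match t with
  | TPoly rho => peval theta rho x
  | TProj F => proj theta C F x
  | TInv eta => pinv theta C eta x
  | TAdd a b => interp C theta a x + interp C theta b x
  | TComp a b => interp C theta a (interp C theta b x)
  end.

(* equality modulo T_C: agreement in every model *)
Definition teq (C : kconf) (a b : term) : Prop :=
  forall (V : lmodType K) (theta : V -> V), is_model theta C ->
    forall x, interp C theta a x = interp C theta b x.

Fixpoint tnat (n : nat) : term :=
  match n with
  | 0%N => TPoly 0
  | n'.+1 => TAdd (tnat n') (TPoly 1)
  end.

End KernelConfigurations.

Definition is_comring (T : Type) (P : T -> Prop) (eq : T -> T -> Prop)
    (zero one : T) (add mul : T -> T -> T) : Prop :=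
  (forall a, P a -> eq a a) /\
  (forall a b, P a -> P b -> eq a b -> eq b a) /\
  (forall a b c, P a -> P b -> P c -> eq a b -> eq b c -> eq a c) /\
  P zero /\ P one /\
  (forall a b, P a -> P b -> P (add a b) /\ P (mul a b)) /\
  (forall a a' b b', P a -> P a' -> P b -> P b' -> eq a a' -> eq b b' ->
     eq (add a b) (add a' b') /\ eq (mul a b) (mul a' b')) /\
  (forall a b c, P a -> P b -> P c -> eq (add a (add b c)) (add (add a b) c)) /\
  (forall a b, P a -> P b -> eq (add a b) (add b a)) /\
  (forall a, P a -> eq (add zero a) a) /\
  (forall a, P a -> exists b, P b /\ eq (add a b) zero) /\
  (forall a b c, P a -> P b -> P c -> eq (mul a (mul b c)) (mul (mul a b) c)) /\
  (forall a b, P a -> P b -> eq (mul a b) (mul b a)) /\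
  (forall a, P a -> eq (mul one a) a /\ eq (mul a one) a) /\
  (forall a b c, P a -> P b -> P c ->
     eq (mul a (add b c)) (add (mul a b) (mul a c)) /\
     eq (mul (add a b) c) (add (mul a c) (mul b c))).

Definition is_char (Z : nat -> Prop) (c : nat) : Prop :=
  (c = 0%N /\ forall n, (0 < n)%N -> ~ Z n) \/
  ((0 < c)%N /\ Z c /\ forall n, (0 < n < c)%N -> ~ Z n).

(* Main.v *)
Require Import Defs.
From HB Require Import structures.
From mathcomp Require Import all_boot all_order all_algebra.
From Stdlib Require Import ClassicalEpsilon Classical.
From mathcomp Require Import ring zify.
Set Implicit Arguments. Unset Strict Implicit. Unset Printing Implicit Defensive.
Import GRing.Theory.
Local Open Scope ring_scope.


Section Peval.
Variable K : fieldType.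
Variable V : lmodType K.

Definition lin (L : V -> V) := forall (a : K) x y, L (a *: x + y) = a *: L x + L y.

Lemma lin0 L : lin L -> L 0 = 0.
Proof.
move=> hL; have := hL 1 0 0; rewrite scaler0 addr0 scale1r => h.
by have := canRL (addrK (L 0)) (esym h); rewrite subrr.
Qed.

Lemma linD L : lin L -> forall x y, L (x + y) = L x + L y.
Proof. by move=> hL x y; have := hL 1 x y; rewrite !scale1r. Qed.

Lemma linZ L : lin L -> forall a x, L (a *: x) = a *: L x.
Proof. by move=> hL a x; rewrite -[a *: x]addr0 hL lin0 // addr0. Qed.

Lemma linN L : lin L -> forall x, L (- x) = - L x.
Proof. by move=> hL x; rewrite -scaleN1r linZ // scaleN1r. Qed.

Lemma linB L : lin L -> forall x y, L (x - y) = L x - L y.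
Proof. by move=> hL x y; rewrite linD // linN. Qed.

Lemma lin_sum L (I : Type) (r : seq I) (F : I -> V) : lin L ->
  L (\sum_(i <- r) F i) = \sum_(i <- r) L (F i).
Proof.
move=> hL; elim: r => [|a r IH]; first by rewrite !big_nil lin0.
by rewrite !big_cons linD // IH.
Qed.

Lemma lin_comp L M : lin L -> lin M -> lin (fun x => L (M x)).
Proof. by move=> hL hM a x y; rewrite hM hL. Qed.

Lemma lin_add L M : lin L -> lin M -> lin (fun x => L x + M x).
Proof.
move=> hL hM a x y; rewrite hL hM scalerDr.
by rewrite -!addrA; congr (_ + _); rewrite addrCA.
Qed.

Lemma lin_iter L n : lin L -> lin (iter n L).
Proof. by move=> hL; elim: n => [|n IH] a x y //=; rewrite IH hL. Qed.

Variable theta : V -> V.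
Hypothesis hth : lin theta.

Lemma peval_wide (p : {poly K}) n x : (size p <= n)%N ->
  peval theta p x = \sum_(i < n) p`_i *: iter i theta x.
Proof.
move=> hn; rewrite /peval -!(big_mkord xpredT (fun i => p`_i *: iter i theta x)).
rewrite (big_cat_nat (leq0n _) hn) /= [X in _ + X]big1_seq ?addr0 // => i.
by rewrite mem_index_iota => /andP[_ /andP[hi _]]; rewrite nth_default // scale0r.
Qed.

Lemma peval0 x : peval theta 0 x = 0.
Proof. by rewrite /peval size_poly0 big_ord0. Qed.

Lemma pevalD (p q : {poly K}) x : peval theta (p + q) x = peval theta p x + peval theta q x.
Proof.
have hm := size_polyD p q.
rewrite !(peval_wide (n:=maxn (size p) (size q))) ?leq_maxl ?leq_maxr //.
by rewrite -big_split /=; apply: eq_bigr => i _; rewrite coefD scalerDl.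
Qed.

Lemma pevalZ c (p : {poly K}) x : peval theta (c *: p) x = c *: peval theta p x.
Proof.
rewrite !(peval_wide (n:=size p)) ?size_scale_leq // scaler_sumr.
by apply: eq_bigr => i _; rewrite coefZ scalerA.
Qed.

Lemma pevalC c x : peval theta c%:P x = c *: x.
Proof.
by rewrite (peval_wide (n:=1)) ?size_polyC_leq1 // big_ord1 coefC.
Qed.

Lemma pevalMX (p : {poly K}) x : peval theta (p * 'X) x = peval theta p (theta x).
Proof.
have hs : (size (p * 'X)%R <= (size p).+1)%N.
  by apply: (leq_trans (size_polyMleq _ _)); rewrite size_polyX addn2.
rewrite (peval_wide _ hs) big_ord_recl coefMX /= scale0r add0r.
rewrite (peval_wide (n:=size p)) //; apply: eq_bigr => i _.
by rewrite coefMX /= -iterSr.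
Qed.

Lemma peval_lin (p : {poly K}) : lin (peval theta p).
Proof.
move=> a x y; rewrite /peval scaler_sumr -big_split /=; apply: eq_bigr => i _.
by rewrite lin_iter // scalerDr !scalerA mulrC.
Qed.

Lemma iter_comm L n x : (forall y, L (theta y) = theta (L y)) ->
  L (iter n theta x) = iter n theta (L x).
Proof. by move=> hc; elim: n => [|n IH] //=; rewrite hc IH. Qed.

Lemma peval_comm L (p : {poly K}) x : lin L -> (forall y, L (theta y) = theta (L y)) ->
  L (peval theta p x) = peval theta p (L x).
Proof.
move=> hL hc; rewrite /peval lin_sum //; apply: eq_bigr => i _.
by rewrite linZ // iter_comm.
Qed.

Lemma pevalM (p q : {poly K}) x : peval theta (p * q) x = peval theta p (peval theta q x).
Proof.
elim/poly_ind: p x => [|p c IH] x; first by rewrite mul0r !peval0.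
rewrite mulrDl -mulrA (mulrC 'X) mulrA mul_polyC pevalD pevalMX IH pevalZ.
rewrite pevalD pevalMX pevalC; congr (peval theta p _ + _).
by rewrite peval_comm.
Qed.

Lemma peval1 x : peval theta 1 x = x.
Proof. by rewrite -polyC1 pevalC scale1r. Qed.

Lemma pevalX x : peval theta 'X x = theta x.
Proof. by rewrite -['X]mul1r pevalMX peval1. Qed.

Lemma pevalN (p : {poly K}) x : peval theta (- p) x = - peval theta p x.
Proof. by rewrite -(scaleN1r p) pevalZ scaleN1r. Qed.

Lemma peval_swap (p q : {poly K}) x : peval theta p (peval theta q x) = peval theta q (peval theta p x).
Proof. by rewrite -!pevalM mulrC. Qed.

Local Notation pe := (peval theta).

Lemma peB p x y : pe p (x - y) = pe p x - pe p y.
Proof. exact: linB (peval_lin p) x y. Qed.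
Lemma peZ p a x : pe p (a *: x) = a *: pe p x.
Proof. exact: linZ (peval_lin p) a x. Qed.
Lemma peDv p x y : pe p (x + y) = pe p x + pe p y.
Proof. exact: linD (peval_lin p) x y. Qed.
Lemma peNv p x : pe p (- x) = - pe p x.
Proof. exact: linN (peval_lin p) x. Qed.
Lemma pe0v p : pe p 0 = 0.
Proof. exact: lin0 (peval_lin p). Qed.


Definition S (g h : {poly K}) :=
  (forall x, exists w, pe g x = pe h (pe g w)) /\
  (forall x, pe h (pe g x) = 0 -> pe g x = 0).

Lemma S_mull g1 g2 h : S g1 h -> S (g1 * g2) h.
Proof.
move=> [hi hk]; split.
  move=> x; have [w hw] := hi x; exists w.
  rewrite mulrC pevalM hw -!pevalM; congr (pe _ w).
  ring.
by move=> x; rewrite !pevalM => /hk.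
Qed.

Lemma S_mulr g1 g2 h : S g2 h -> S (g1 * g2) h.
Proof. by move=> /(S_mull g1); rewrite mulrC. Qed.

Lemma S_mulh g h1 h2 : S g h1 -> S g h2 -> S g (h1 * h2).
Proof.
move=> [hi1 hk1] [hi2 hk2]; split.
  move=> x; have [w hw] := hi2 x; have [w' hw'] := hi1 w.
  exists w'; rewrite hw hw' -!pevalM; congr (pe _ w').
  ring.
move=> y; rewrite pevalM (peval_swap h2 g) => hy; apply: hk2; rewrite peval_swap; apply: hk1; exact: hy.
Qed.

Lemma S_C g c : c != 0 -> S g c%:P.
Proof.
move=> hc; split.
  move=> x; exists (c^-1 *: x); rewrite pevalC peZ.
  by rewrite scalerA divff // scale1r.
move=> x; rewrite pevalC => h.
by rewrite -[pe g x]scale1r -(mulVf hc) -scalerA h scaler0.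
Qed.

Lemma S_1 g : S g 1.
Proof. by rewrite -polyC1; apply: S_C; exact: oner_neq0. Qed.

Lemma S_exp g h n : S g h -> S g (h ^+ n).
Proof.
move=> hS; elim: n => [|n IH]; first by rewrite expr0; apply: S_1.
by rewrite exprS; apply: S_mulh.
Qed.

Lemma S_decomp g : S g g -> forall x,
  exists u, (exists w, pe g w = u) /\ pe g (x - u) = 0.
Proof.
move=> [hi _] x; have [w hw] := hi x; exists (pe g w); split; first by exists w.
by rewrite peB hw subrr.
Qed.

Lemma S_decomp_uniq g : S g g -> forall x u1 u2,
  (exists w, pe g w = u1) -> pe g (x - u1) = 0 ->
  (exists w, pe g w = u2) -> pe g (x - u2) = 0 -> u1 = u2.
Proof.
move=> [_ hk] x u1 u2 [w1 <-] h1 [w2 <-] h2.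
apply/eqP; rewrite -subr_eq0 -peB; apply/eqP/hk.
rewrite peB; have -> : pe g w1 - pe g w2 = (x - pe g w2) - (x - pe g w1) by rewrite opprB [RHS]addrC addrA subrK.
by rewrite peB h1 h2 subrr.
Qed.

Lemma S_inv g h : S g h -> forall y, (exists w, pe g w = y) ->
  exists u, (exists w, pe g w = u) /\ pe h u = y.
Proof.
move=> [hi _] y [w <-]; have [w' hw'] := hi w.
by exists (pe g w'); split; [exists w' | rewrite hw'].
Qed.

Lemma S_inv_uniq g h : S g h -> forall u1 u2,
  (exists w, pe g w = u1) -> (exists w, pe g w = u2) -> pe h u1 = pe h u2 -> u1 = u2.
Proof.
move=> [_ hk] u1 u2 [w1 <-] [w2 <-] e.
apply/eqP; rewrite -subr_eq0 -peB; apply/eqP/hk.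
by rewrite !peB e subrr.
Qed.

End Peval.


Section PolyFacts.
Variable K : fieldType.
Implicit Types p q f g : {poly K}.

Lemma mirr_coprime f g : mirr f -> mirr g -> f != g -> coprimep f g.
Proof.
move=> [mf irf] [mg irg] ne; rewrite irreducible_poly_coprime //; apply/negP => d.
have hs : size f != 1%N by case: irf => h _; rewrite neq_ltn h orbT.
have := apply_irredp irg hs d; rewrite eqp_monic // => /eqP e.
by rewrite e eqxx in ne.
Qed.

Lemma coprime_FC (C : kconf K) f s : mirr f ->
  (forall g, g \in s -> mirr g /\ g != f) -> coprimep f (FC C s).
Proof.
move=> hf; elim: s => [|g s IH] hs; first by rewrite /FC big_nil coprimep1.
rewrite /FC big_cons coprimepMr; apply/andP; split; last first.
  by apply: IH => h hh; apply: hs; rewrite inE hh orbT.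
have [hg ne] := hs g (mem_head _ _).
by apply: coprimep_expr; apply: mirr_coprime => //; rewrite eq_sym.
Qed.

Lemma mirr_scale p : irreducible_poly p ->
  mirr ((lead_coef p)^-1 *: p) /\ (lead_coef p)^-1 *: p %= p.
Proof.
move=> irp; have p0 := irredp_neq0 irp.
have lc0 : lead_coef p != 0 by rewrite lead_coef_eq0.
have ilc0 : (lead_coef p)^-1 != 0 by rewrite invr_eq0.
have he := eqp_scale p ilc0.
split=> //; split.
  by rewrite monicE lead_coefZ mulVf.
case: irp => h1 h2; split; first by rewrite size_scale.
move=> q hq; rewrite dvdpZr // => d.
by apply: eqp_trans (h2 q hq d) _; rewrite eqp_sym.
Qed.

Lemma red_split p : p != 0 -> size p != 1%N -> ~ irreducible_poly p ->
  exists r q, [/\ p = r * q, r != 0, q != 0, (size r < size p)%N & (size q < size p)%N].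
Proof.
move=> p0 ps1 nirr.
have sp : (1 < size p)%N.
  by move: p0 ps1; rewrite -size_poly_gt0; case: (size p) => [|[]].
have [q [hq1 hqd hqe]] : exists q, [/\ size q != 1%N, q %| p & ~~ (q %= p)].
  apply: NNPP => hne; apply: nirr; split=> // q h1 h2.
  case: (boolP (q %= p)) => // hn; exfalso; apply: hne; exists q; split=> //.
have q0 : q != 0 by apply: contraNneq p0 => e; rewrite e dvd0p in hqd.
have sqp : (size q < size p)%N.
  rewrite ltn_neqAle dvdp_leq // andbT; apply: contraNN hqe.
  by rewrite dvdp_size_eqp.
have e := divpK hqd.
have r0 : p %/ q != 0 by apply: contraNneq p0 => e0; rewrite -e e0 mul0r.
exists (p %/ q), q; split=> //.
have := size_mul r0 q0; rewrite e => hs.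
have : (0 < size q)%N by rewrite size_poly_gt0.
move: hq1 hs; rewrite -subn1; move: (size (p %/ q)) (size q) (size p) => a b c; lia.
Qed.

Lemma isFac_ex p : p != 0 -> exists s, isFac p s.
Proof.
have [n] := ubnP (size p); elim: n p => // n IH p hsz p0.
case: (boolP (size p == 1%N)) => [/size_poly1P [c hc ->]|hs1].
  exists [::]; split=> // f; split=> //= [[[_ [hf _]] hd]].
  have := dvdp_leq (p:=f) (q:=c%:P); rewrite polyC_eq0 hc size_polyC hc => /(_ isT hd).
  by move: hf; case: (size f) => [|[]].
case: (classic (irreducible_poly p)) => [irp|nirp].
  have [hm he] := mirr_scale irp.
  exists [:: (lead_coef p)^-1 *: p]; split=> // f; rewrite inE; split.
    by move=> /eqP ->; split=> //; rewrite (eqp_dvdl _ he) dvdpp.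
  move=> [[mf irf] d].
  have hs : size f != 1%N by case: irf => h _; rewrite neq_ltn h orbT.
  have e1 := apply_irredp irp hs d.
  rewrite -eqp_monic //; [by apply: eqp_trans e1 _; rewrite eqp_sym | by case: hm].
have [r [q [e r0 q0 sr sq]]] := red_split p0 hs1 nirp.
have [sr' [ur hr]] := IH r (leq_trans sr (ltnSE hsz)) r0.
have [sq' [uq hq]] := IH q (leq_trans sq (ltnSE hsz)) q0.
exists (undup (sr' ++ sq')); split; first exact: undup_uniq.
move=> f; rewrite mem_undup mem_cat; split.
  case/orP => [/hr [hf d] | /hq [hf d]]; split=> //; rewrite e.
    exact: dvdp_mulr.
  exact: dvdp_mull.
move=> [hf d]; move: d; rewrite e.
case: (boolP (f %| r)) => fr.
  by move=> _; apply/orP; left; apply/hr.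
have cp : coprimep f r by rewrite irreducible_poly_coprime //; case: hf.
by rewrite Gauss_dvdpr // => fq; apply/orP; right; apply/hq.
Qed.

Lemma facsP (eta : {poly K}) : eta != 0 -> isFac eta (facs eta).
Proof.
by move=> h; rewrite /facs; apply: epsilon_spec; apply: isFac_ex.
Qed.

End PolyFacts.


Section SDvd.
Variable K : fieldType.
Variable V : lmodType K.
Variable theta : V -> V.
Hypothesis hth : lin theta.

Lemma S_dvd (Q eta : {poly K}) :
  (forall f, mirr f -> f %| eta -> S theta Q f) ->
  forall p, p != 0 -> p %| eta -> S theta Q p.
Proof.
move=> hf p; have [n] := ubnP (size p); elim: n p => // n IH p hsz p0 pd.
case: (boolP (size p == 1%N)) => [/size_poly1P [c hc ->]|hs1].
  exact: S_C.
case: (classic (irreducible_poly p)) => [irp|nirp].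
  have [hm he] := mirr_scale irp.
  have lc0 : lead_coef p != 0 by rewrite lead_coef_eq0.
  have -> : p = (lead_coef p)%:P * ((lead_coef p)^-1 *: p).
    by rewrite mul_polyC scalerA divff // scale1r.
  apply: S_mulh => //; first exact: S_C.
  by apply: hf => //; rewrite (eqp_dvdl _ he).
have [r [q [e r0 q0 sr sq]]] := red_split p0 hs1 nirp.
rewrite e in pd *; apply: S_mulh => //.
  apply: IH r0 _; first exact: leq_trans sr (ltnSE hsz).
  exact: dvdp_trans (dvdp_mulr _ (dvdpp _)) pd.
apply: IH q0 _; first exact: leq_trans sq (ltnSE hsz).
exact: dvdp_trans (dvdp_mull _ (dvdpp _)) pd.
Qed.

End SDvd.

Section Model.
Variable K : fieldType.
Variable C : kconf K.
Variable V : lmodType K.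
Variable theta : V -> V.
Hypothesis hm : is_model theta C.

Local Notation pe := (peval theta).

Lemma hth : lin theta.
Proof. by case: hm. Qed.

Lemma cnatE f k : kc_c C f = Some k -> cnat (kc_c C) f = k.
Proof. by rewrite /cnat => ->. Qed.

Lemma alg_ker s f k x : support_seq (kc_c C) s -> (forall y, pe (FC C s) y = 0) ->
  mirr f -> kc_c C f = Some k -> pe (f ^+ k.+1) x = 0 -> pe (f ^+ k) x = 0.
Proof.
move=> [us [hs1 hs2]] hP hf hk h0.
have [Q [eQ cQ]] : exists Q, FC C s = f ^+ k * Q /\ coprimep f Q.
  case: (boolP (f \in s)) => fs.
    exists (FC C (rem f s)); split.
      by rewrite /FC (big_rem f fs) /= (cnatE hk).
    apply: coprime_FC => // g hg; split.
      by have [] := hs1 g (mem_rem hg).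
    by apply: contraTneq hg => ->; rewrite mem_rem_uniqF.
  have := hs2 f hf fs; rewrite hk => -[->].
  exists (FC C s); split; first by rewrite expr0 mul1r.
  apply: coprime_FC => // g hg; split; first by have [] := hs1 g hg.
  by apply: contraNneq fs => <-.
have /Bezout_eq1_coprimepP [[u v] /= e] : coprimep (f ^+ k.+1) Q.
  exact: coprimep_expl.
rewrite -[pe _ x](peval1 theta) -e (pevalD theta).
rewrite -!(pevalM hth).
have -> : u * f ^+ k.+1 * f ^+ k = (u * f ^+ k) * f ^+ k.+1 by ring.
have -> : v * Q * f ^+ k = v * (f ^+ k * Q) by ring.
by rewrite -eQ !(pevalM hth) h0 hP !(pe0v hth) addr0.
Qed.

Lemma S_fk f k : mirr f -> kc_c C f = Some k -> S theta (f ^+ k) f.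
Proof.
move=> hf hk; have [_ [hker hi]] := hm; split.
  move=> x; have := (hi f k hf hk (pe (f ^+ k) x)).1 (ex_intro _ x erefl).
  by move=> [w hw]; exists w; rewrite -hw exprS (pevalM hth).
move=> x; rewrite -(pevalM hth) -exprS; move: hker.
case: (kc_d C) => [n [s [hs hP]]|hker].
  by move=> h; apply: alg_ker hs hP hf hk h.
by move=> h; apply/(hker f k hf hk x).
Qed.

Lemma S_FC_in F f h : f \in F -> S theta (f ^+ cnat (kc_c C) f) h -> S theta (FC C F) h.
Proof.
elim: F => [|g F IH] //; rewrite inE => /orP[/eqP <-|fF] hS; rewrite /FC big_cons.
  exact: (S_mull hth).
by apply: (S_mulr hth); apply: IH.
Qed.

Lemma S_FC_prod F g : (forall f, f \in F -> S theta g (f ^+ cnat (kc_c C) f)) ->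
  S theta g (FC C F).
Proof.
elim: F => [|f F IH] hF; first by rewrite /FC big_nil; exact: (S_1 hth).
rewrite /FC big_cons; apply: (S_mulh hth); first by apply: hF; rewrite mem_head.
by apply: IH => h hh; apply: hF; rewrite inE hh orbT.
Qed.

Definition goodF (F : seq {poly K}) :=
  forall f, f \in F -> mirr f /\ exists k, kc_c C f = Some k.

Lemma S_FC F : goodF F -> S theta (FC C F) (FC C F).
Proof.
move=> hF; apply: S_FC_prod => f hf; apply: (S_FC_in hf).
have [mf [k hk]] := hF f hf; rewrite (cnatE hk); apply: (S_exp hth).
exact: S_fk.
Qed.

Section Proj.
Variable F : seq {poly K}.
Hypothesis hF : goodF F.
Local Notation P := (FC C F).
Local Notation pr := (proj theta C F).

Lemma proj_spec x : (exists w, pe P w = pr x) /\ pe P (x - pr x) = 0.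
Proof.
have [u hu] := S_decomp hth (S_FC hF) x.
exact: (epsilon_spec (inhabits (0 : V)) (fun u => Im (pe P) u /\ Ker (pe P) (x - u)) (ex_intro _ u hu)).
Qed.

Lemma proj_uniq x u : (exists w, pe P w = u) -> pe P (x - u) = 0 -> pr x = u.
Proof.
move=> h1 h2; have [h3 h4] := proj_spec x.
exact: (S_decomp_uniq hth (S_FC hF) h3 h4 h1 h2).
Qed.

Lemma proj_lin : lin pr.
Proof.
move=> a x y; apply: proj_uniq.
  have [[w1 h1] _] := proj_spec x; have [[w2 h2] _] := proj_spec y.
  by exists (a *: w1 + w2); rewrite (peval_lin hth) h1 h2.
have -> : a *: x + y - (a *: pr x + pr y) = a *: (x - pr x) + (y - pr y).
  by rewrite opprD addrACA scalerBr.
by rewrite (peval_lin hth) (proj_spec x).2 (proj_spec y).2 scaler0 addr0.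
Qed.

Lemma proj_comm L : lin L -> (forall y, L (theta y) = theta (L y)) ->
  forall x, L (pr x) = pr (L x).
Proof.
move=> hL hc x; apply: esym; apply: proj_uniq.
  have [[w h1] _] := proj_spec x.
  by exists (L w); rewrite -peval_comm // h1.
by rewrite -linB // -peval_comm // (proj_spec x).2 lin0.
Qed.

End Proj.

Section Pinv.
Variable eta : {poly K}.
Hypothesis heta : eta \is monic.
Hypothesis hc : forall f, mirr f -> f %| eta -> kc_c C f <> None.
Local Notation Q := (FC C (facs eta)).
Local Notation pi := (pinv theta C eta).
Local Notation pr := (proj theta C (facs eta)).

Lemma eta0 : eta != 0.
Proof. exact: monic_neq0. Qed.

Lemma goodF_eta : goodF (facs eta).
Proof.
move=> f hf; have [_ h] := facsP eta0; have [mf fd] := (h f).1 hf.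
split=> //; move: (hc mf fd); case: (kc_c C f) => [k _|//]; by exists k.
Qed.

Lemma S_Qeta : S theta Q eta.
Proof.
apply: (S_dvd hth _ eta0 (dvdpp eta)).
move=> f mf fd; have [_ h] := facsP eta0; have fs := (h f).2 (conj mf fd).
move: (hc mf fd); case hk: (kc_c C f) => [k|//] _.
by apply: (S_FC_in fs); rewrite (cnatE hk); apply: S_fk.
Qed.

Lemma pinv_spec x : (exists w, pe Q w = pi x) /\ pe eta (pi x) = pr x.
Proof.
have [u hu] := S_inv S_Qeta ((proj_spec goodF_eta x).1).
exact: (epsilon_spec (inhabits (0 : V)) (fun u => Im (pe Q) u /\ pe eta u = pr x) (ex_intro _ u hu)).
Qed.

Lemma pinv_uniq x u : (exists w, pe Q w = u) -> pe eta u = pr x -> pi x = u.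
Proof.
move=> h1 h2; have [h3 h4] := pinv_spec x.
by apply: (S_inv_uniq hth S_Qeta h3 h1); rewrite h4 h2.
Qed.

Lemma pinv_lin : lin pi.
Proof.
move=> a x y; apply: pinv_uniq.
  have [[w1 h1] _] := pinv_spec x; have [[w2 h2] _] := pinv_spec y.
  by exists (a *: w1 + w2); rewrite (peval_lin hth) h1 h2.
by rewrite (peval_lin hth) (pinv_spec x).2 (pinv_spec y).2 (proj_lin goodF_eta).
Qed.

Lemma pinv_comm L : lin L -> (forall y, L (theta y) = theta (L y)) ->
  forall x, L (pi x) = pi (L x).
Proof.
move=> hL hcL x; apply: esym; apply: pinv_uniq.
  have [[w h1] _] := pinv_spec x.
  by exists (L w); rewrite -peval_comm // h1.
by rewrite -peval_comm // (pinv_spec x).2 (proj_comm goodF_eta).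
Qed.

End Pinv.

Definition central (g : V -> V) :=
  lin g /\ forall L, lin L -> (forall y, L (theta y) = theta (L y)) ->
    forall x, L (g x) = g (L x).

Lemma interp_good t : wf C t -> central (interp C theta t).
Proof.
elim: t => [rho|F|eta|a IHa b IHb|a IHa b IHb] /=.
- move=> _; split; first exact: peval_lin hth rho.
  by move=> L hL hc x; rewrite peval_comm.
- move=> [_ hF]; have hg : goodF F.
    by move=> f hf; have [mf [k hk]] := hF f hf; split=> //; exists k.+1.
  by split; [exact: proj_lin | move=> L hL hc x; apply: proj_comm].
- move=> [heta hc]; split; first exact: pinv_lin.
  by move=> L hL hcL x; apply: pinv_comm.
- move=> [/IHa [la ca] /IHb [lb cb]]; split; first exact: lin_add.
  by move=> L hL hc x; rewrite linD // ca // cb.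
- move=> [/IHa [la ca] /IHb [lb cb]]; split; first exact: lin_comp.
  by move=> L hL hc x; rewrite ca // cb.
Qed.

End Model.


Section AlgModel.
Variable K : fieldType.
Variable A : comUnitRingType.
Variable phi : {rmorphism {poly K} -> A}.

Definition LA_ (f : {rmorphism {poly K} -> A}) : Type := A.
Local Notation LA := (LA_ phi).
HB.instance Definition _ := GRing.Zmodule.on LA.

Definition lscale (a : K) (x : LA) : LA := phi a%:P * x.

Fact lscaleA a b v : lscale a (lscale b v) = lscale (a * b) v.
Proof. by rewrite /lscale polyCM rmorphM mulrA. Qed.
Fact lscale1 : left_id 1 lscale.
Proof. by move=> x; rewrite /lscale rmorph1 mul1r. Qed.
Fact lscaleDr : right_distributive lscale +%R.
Proof. by move=> a x y; rewrite /lscale mulrDr. Qed.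
Fact lscaleDl v : {morph lscale^~ v: a b / a + b}.
Proof. by move=> a b; rewrite /lscale polyCD rmorphD mulrDl. Qed.

HB.instance Definition _ := GRing.Zmodule_isLmodule.Build K LA
  lscaleA lscale1 lscaleDr lscaleDl.

Definition LAth (x : LA) : LA := (phi 'X : A) * (x : A).

Lemma LA_scaleE a (x : LA) : a *: x = (phi a%:P : A) * (x : A).
Proof. by []. Qed.

Lemma LAth_lin : lin LAth.
Proof.
by move=> a x y; rewrite /LAth !LA_scaleE mulrDr mulrCA.
Qed.

Lemma LA_iter i (x : LA) : iter i LAth x = (phi 'X ^+ i : A) * (x : A).
Proof.
elim: i => [|i IH] /=; first by rewrite expr0 mul1r.
by rewrite IH /LAth mulrA -exprS.
Qed.

Lemma LA_peval p (x : LA) : peval LAth p x = (phi p : A) * (x : A).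
Proof.
rewrite /peval.
have -> : (\sum_(i < size p) p`_i *: iter i LAth x) =
   \sum_(i < size p) ((phi (p`_i *: 'X^i) : A) * (x : A) : LA).
  by apply: eq_bigr => i _; rewrite LA_iter LA_scaleE -mul_polyC rmorphM rmorphXn mulrA.
rewrite -[in RHS](coefK p) poly_def rmorph_sum mulr_suml.
by [].
Qed.

Lemma LA_Im q y : Im (peval LAth q) y <-> exists x : LA, (phi q : A) * (x : A) = y.
Proof. by split=> [[x hx]|[x hx]]; exists x; rewrite -hx LA_peval. Qed.

Lemma LA_Im_unit q (y : LA) : (phi q : A) \is a GRing.unit -> Im (peval LAth q) y.
Proof.
move=> hu; apply/LA_Im; exists ((phi q : A)^-1 * (y : A)).
by rewrite mulrA mulrV // mul1r.
Qed.

Lemma LA_Im_zero q (y : LA) : (phi q : A) = 0 -> Im (peval LAth q) y <-> y = 0.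
Proof.
move=> h0; rewrite LA_Im h0; split=> [[x <-]|->]; first by rewrite mul0r.
by exists 0; rewrite mul0r.
Qed.

Lemma LA_nz : (1 : LA) != 0.
Proof. exact: oner_neq0. Qed.

End AlgModel.


Section NZ.
Variable K : fieldType.
Variable C : kconf K.

Lemma nz_trans : kc_d C = None ->
  exists (V : lmodType K) (theta : V -> V) (x : V), is_model theta C /\ x != 0.
Proof.
move=> hd.
pose phi : {rmorphism {poly K} -> {fraction {poly K}}} := @tofrac _.
have nz q : q != 0 -> (phi q : {fraction {poly K}}) != 0 by rewrite tofrac_eq0.
exists (LA_ phi), (@LAth _ _ phi), 1; split; last exact: LA_nz.
split; first exact: LAth_lin.
rewrite hd; split.
  move=> f k [_ irf] hk x; rewrite /Ker !LA_peval exprS rmorphM -mulrA.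
  split=> [->|]; first by rewrite mulr0.
  by move/eqP; rewrite mulf_eq0 (negbTE (nz _ (irredp_neq0 irf))) /= => /eqP.
move=> f k [_ irf] hk y; have f0 := irredp_neq0 irf.
split=> _; apply: LA_Im_unit; rewrite unitfE; apply: nz; exact: expf_neq0.
Qed.

Lemma nz_alg n : kconf_ok C -> kc_d C = Some n ->
  exists (V : lmodType K) (theta : V -> V) (x : V), is_model theta C /\ x != 0.
Proof.
move=> [hn0 hsum] hd; have [s [hsupp hn]] := hsum n hd.
have [us [hs1 hs2]] := hsupp.
have [f0 f0s c0] : exists2 f0, f0 \in s & cnat (kc_c C) f0 != 0%N.
  case: (boolP (has (fun f => cnat (kc_c C) f != 0%N) s)) => [/hasP [f0 h1 h2]|/hasPn h].
    by exists f0.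
  exfalso; apply: hn0; rewrite hd hn big1_seq // => f /andP[_ /h].
  by rewrite negbK => /eqP ->; rewrite muln0.
have [[mf0 irf0] _] := hs1 f0 f0s.
pose phi : {rmorphism {poly K} -> {poly %/ f0}} := in_qpoly f0.
have emk : mk_monic f0 = f0.
  by rewrite /mk_monic; case: irf0 => -> _; rewrite mf0.
have h0 : (phi f0 : {poly %/ f0}) = 0.
  apply: val_inj => /=; rewrite emk; apply: Pdiv.Ring.rmodpp.
  exact: mulrC.
have hFC : (phi (FC C s) : {poly %/ f0}) = 0.
  by rewrite /FC (big_rem f0 f0s) /= rmorphM rmorphXn h0 expr0n (negbTE c0) mul0r.
exists (LA_ phi), (@LAth _ _ phi), 1; split; last exact: LA_nz.
split; first exact: LAth_lin.
rewrite hd; split.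
  by exists s; split=> // x; rewrite LA_peval hFC mul0r.
move=> f k hf hk y.
case: (eqVneq f f0) => [ef|nef].
  subst f; have kE := cnatE hk.
  have k0 : (0 < k)%N by rewrite lt0n -kE.
  rewrite !LA_Im_zero //; rewrite rmorphXn h0 expr0n //.
  by rewrite -(prednK k0).
have cp : coprimep f0 f.
  by apply: mirr_coprime => //; rewrite eq_sym.
have /Bezout_eq1_coprimepP [[u v] /= e] := cp.
have hu : (phi f : {poly %/ f0}) \is a GRing.unit.
  apply/unitrPr; exists (phi v); rewrite mulrC.
  have := congr1 phi e; rewrite rmorphD !rmorphM h0 mulr0 add0r rmorph1.
  by [].
by split=> _; apply: LA_Im_unit; rewrite rmorphXn unitrX.
Qed.

Lemma nonzero_model : kconf_ok C ->
  exists (V : lmodType K) (theta : V -> V) (x : V), is_model theta C /\ x != 0.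
Proof.
move=> hC; case hd: (kc_d C) => [n|].
  exact: nz_alg hC hd.
exact: nz_trans.
Qed.

End NZ.


Lemma interp_tnat (K : fieldType) (C : kconf K) (V : lmodType K) (theta : V -> V) n x :
  interp C theta (tnat K n) x = x *+ n.
Proof.
elim: n => [|n IH] /=; first by rewrite peval0.
by rewrite IH peval1 mulrSr.
Qed.

Lemma is_char_iff (Z1 Z2 : nat -> Prop) c : (forall n, Z1 n <-> Z2 n) ->
  is_char Z1 c <-> is_char Z2 c.
Proof.
move=> h; rewrite /is_char; split.
  case=> [[-> H]|[H1 [H2 H3]]]; [left; split=> // n hn /h; exact: H|].
  right; split=> //; split; first exact/h.
  by move=> n hn /h; apply: H3.
case=> [[-> H]|[H1 [H2 H3]]]; [left; split=> // n hn /h; exact: H|].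
right; split=> //; split; first exact/h.
by move=> n hn /h; apply: H3.
Qed.

Unset Implicit Arguments.
Theorem theorem3p19 (K : fieldType) (C : kconf K) :
  kconf_ok C ->
  is_comring (wf C) (teq C) (TPoly 0) (TPoly 1) (@TAdd K) (@TComp K) /\
  (forall c : nat,
     is_char (fun n => (n%:R : K) = 0) c <->
     is_char (fun n => teq C (tnat K n) (TPoly 0)) c).
Proof.
move=> hC; split.
  have cen : forall a, wf C a -> forall (V : lmodType K) (theta : V -> V),
      is_model theta C -> central theta (interp C theta a).
    by move=> a wa V theta hm; apply: interp_good.
  have comm : forall a b, wf C a -> wf C b -> forall (V : lmodType K) (theta : V -> V),
      is_model theta C -> forall x,
      interp C theta a (interp C theta b x) = interp C theta b (interp C theta a x).
    move=> a b wa wb V theta hm x.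
    have [la ca] := cen a wa V theta hm; have [lb cb] := cen b wb V theta hm.
    apply: (cb (interp C theta a) la) => y; apply: esym; apply: ca => //; exact: hth hm.
  refine (conj _ (conj _ (conj _ (conj _ (conj _ (conj _ (conj _ (conj _ (conj _ (conj _ (conj _ (conj _ (conj _ (conj _ _)))))))))))))).
  - by move=> a _ V th hm x.
  - by move=> a b _ _ h V th hm x; rewrite (h V th hm x).
  - by move=> a b c _ _ _ h1 h2 V th hm x; rewrite (h1 V th hm x) (h2 V th hm x).
  - by [].
  - by [].
  - by move=> a b wa wb.
  - move=> a a' b b' _ _ _ _ ha hb; split=> V th hm x /=.
      by rewrite (ha V th hm x) (hb V th hm x).
    by rewrite (hb V th hm x) (ha V th hm).
  - by move=> a b c _ _ _ V th hm x /=; rewrite addrA.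
  - by move=> a b _ _ V th hm x /=; rewrite addrC.
  - by move=> a _ V th hm x /=; rewrite peval0 add0r.
  - move=> a wa; exists (TComp (TPoly (-1)) a); split=> // V th hm x /=.
    by rewrite pevalN peval1 subrr peval0.
  - by move=> a b c _ _ _ V th hm x.
  - by move=> a b wa wb V th hm x /=; apply: comm.
  - by move=> a _; split=> V th hm x /=; rewrite peval1.
  - move=> a b c wa _ _; split=> V th hm x //=.
    by have [la _] := cen a wa V th hm; rewrite (linD la).
move=> c; apply: is_char_iff => n; split.
  move=> h V th hm x; rewrite interp_tnat /= peval0 -scaler_nat h scale0r.
  by [].
move=> h; have [V [th [x [hm nx]]]] := nonzero_model hC.
have := h V th hm x; rewrite interp_tnat /= peval0 -scaler_nat => e.
apply/eqP; apply: contraNT nx => hn.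
by rewrite -[x]scale1r -(mulVf hn) -scalerA e scaler0.
Qed.
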